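(* Let $\mathcal V$ be a multivector field on $X$ and let $C\subset X$ be a strongly connected component of the digraph $G_{\mathcal V}$ such that there exists an essential full solution with image contained in $C$. Then $C$ is an isolated invariant set.
   Context: $X$ is a finite $T_0$ topological space. For $A\subset X$, $\operatorname{cl}A$ is its closure and $\operatorname{mo}A:=\operatorname{cl}A\setminus A$. $A$ is locally closed if it is the intersection of an open and a closed subset of $X$. $H$ denotes relative singular homology. A multivector is a nonempty locally closed subset of $X$; a multivector field $\mathcal V$ on $X$ is a partition of $X$ into multivectors. For $x\in X$, $[x]$ denotes the element of $\mathcal V$ containing $x$. A multivector $V$ is critical if $H(\operatorname{cl}V,\operatorname{mo}V)\neq0$, regular otherwise. Put $\Pi_{\mathcal V}(x):=[x]\cup\operatorname{cl}\{x\}$ and $\Pi_{\mathcal V}(A):=\bigcup_{x\in A}\Pi_{\mathcal V}(x)$. $G_{\mathcal V}$ is the digraph with vertex set $X$ and an edge $x\to y$ iff $y\in\Pi_{\mathcal V}(x)$; its strongly connected components are the equivalence classes of the relation ''there is a directed path from $x$ to $y$ and from $y$ to $x$''. A $\mathbb Z$-interval is $\mathbb Z\cap I$ for a real interval $I$. A solution in $A\subset X$ is a map $\varphi:D\to A$ on a $\mathbb Z$-interval $D$ with $\varphi(i+1)\in\Pi_{\mathcal V}(\varphi(i))$ whenever $i,i+1\in D$; it is full if $D=\mathbb Z$, and a path if $D$ is bounded, its endpoints being $\varphi(\min D)$ and $\varphi(\max D)$. A full solution $\varphi$ is essential if for every $t\in\mathbb Z$ with $[\varphi(t)]$ regular,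 the set $\{s\in\mathbb Z:\varphi(s)\notin[\varphi(t)]\}$ is unbounded below and unbounded above. $\operatorname{Inv}A$ is the set of $x\in A$ such that there is an essential full solution $\varphi$ with image in $A$ and $\varphi(0)=x$; $A$ is invariant if $\operatorname{Inv}A=A$. A closed set $N$ isolates an invariant set $S\subset N$ if (a) every path in $N$ with both endpoints in $S$ has image contained in $S$, and (b) $\Pi_{\mathcal V}(S)\subset N$. An invariant set is an isolated invariant set if some closed set isolates it. *)

(* Defs.v *)
From mathcomp Require Import all_boot all_order all_algebra.
Set Implicit Arguments. Unset Strict Implicit. Unset Printing Implicit Defensive.
Import Order.TTheory GRing.Theory Num.Theory.
Local Open Scope ring_scope.

Section FiniteTop.
Variable T : finType.

(* A topology on the finite set T, given by its family of open sets
   (finite, so closure under binary unions/intersections suffices). *)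
Definition is_topology (O : {set {set T}}) : Prop :=
  [/\ set0 \in O, setT \in O,
      (forall A B, A \in O -> B \in O -> A :|: B \in O) &
      (forall A B, A \in O -> B \in O -> A :&: B \in O)].

Definition is_T0 (O : {set {set T}}) : Prop :=
  forall x y : T, x != y -> exists2 U, U \in O & (x \in U) != (y \in U).

Definition is_closed (O : {set {set T}}) (A : {set T}) : bool := ~: A \in O.

Definition cl (O : {set {set T}}) (A : {set T}) : {set T} :=
  \bigcap_(B | is_closed O B && (A \subset B)) B.

Definition mo (O : {set {set T}}) (A : {set T}) : {set T} := cl O A :\: A.

Definition locally_closed (O : {set {set T}}) (A : {set T}) : Prop :=
  exists U F, [/\ U \in O, is_closed O F & A = U :&: F].

Definition multivector (O : {set {set T}}) (A : {set T}) : Prop :=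
  A != set0 /\ locally_closed O A.

Definition mvfield (O : {set {set T}}) (V : {set {set T}}) : Prop :=
  partition V [set: T] /\ (forall A, A \in V -> multivector O A).

Definition cell (V : {set {set T}}) (x : T) : {set T} := pblock V x.

Definition Pi (O : {set {set T}}) (V : {set {set T}}) (x : T) : {set T} :=
  cell V x :|: cl O [set x].

Definition PiS (O : {set {set T}}) (V : {set {set T}}) (A : {set T}) : {set T} :=
  \bigcup_(x in A) Pi O V x.

Definition Gedge (O : {set {set T}}) (V : {set {set T}}) : rel T :=
  fun x y => y \in Pi O V x.

Definition is_scc (O : {set {set T}}) (V : {set {set T}}) (C : {set T}) : Prop :=
  exists x, C = [set y | connect (Gedge O V) x y && connect (Gedge O V) y x].

Definition full_solution (O : {set {set T}}) (V : {set {set T}}) (phi : int -> T) : Prop :=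
  forall t : int, phi (t + 1) \in Pi O V (phi t).

Definition essential (V : {set {set T}}) (crit : {set T} -> bool) (phi : int -> T) : Prop :=
  forall t : int, ~~ crit (cell V (phi t)) ->
    (forall n : int, exists2 s : int, s <= n & phi s \notin cell V (phi t)) /\
    (forall n : int, exists2 s : int, n <= s & phi s \notin cell V (phi t)).

Definition in_Inv (O : {set {set T}}) (V : {set {set T}}) (crit : {set T} -> bool)
  (A : {set T}) (x : T) : Prop :=
  x \in A /\ exists phi : int -> T,
    [/\ full_solution O V phi, essential V crit phi, (forall t, phi t \in A) & phi 0 = x].

Definition invariant (O : {set {set T}}) (V : {set {set T}}) (crit : {set T} -> bool)
  (A : {set T}) : Prop :=
  forall x, x \in A <-> in_Inv O V crit A x.

Definition is_path (O : {set {set T}}) (V : {set {set T}}) (a b : int) (phi : int -> T) : Prop :=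
  a <= b /\ forall i : int, a <= i -> i < b -> phi (i + 1) \in Pi O V (phi i).

Definition isolates (O : {set {set T}}) (V : {set {set T}}) (N S : {set T}) : Prop :=
  [/\ is_closed O N, S \subset N,
      (forall (a b : int) (phi : int -> T), is_path O V a b phi ->
         (forall i, a <= i -> i <= b -> phi i \in N) ->
         phi a \in S -> phi b \in S ->
         forall i, a <= i -> i <= b -> phi i \in S) &
      PiS O V S \subset N].

Definition isolated_invariant (O : {set {set T}}) (V : {set {set T}}) (crit : {set T} -> bool)
  (S : {set T}) : Prop :=
  invariant O V crit S /\ exists N, isolates O V N S.

End FiniteTop.

(* Main.v *)
Require Import Defs.
From mathcomp Require Import all_boot all_order all_algebra zify.
Import Order.TTheory GRing.Theory Num.Theory.
Local Open Scope ring_scope.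

Section Gen.
Variables (T : finType) (e : rel T) (r : T).
Variables (C : {set T}) (hCd : C = [set y | connect e r y && connect e y r]).

Lemma inC {a b z} : a \in C -> b \in C -> connect e a z -> connect e z b -> z \in C.
Proof.
rewrite hCd !inE => /andP[ra ar] /andP[rb br] az zb.
by rewrite (connect_trans ra az) (connect_trans zb br).
Qed.

Lemma path_inC {a p} : a \in C -> path e a p -> last a p \in C -> {subset p <= C}.
Proof.
move=> aC pa lC z zp.
apply: (inC aC lC).
  by apply: (path_connect pa); rewrite inE zp orbT.
case/splitPr: zp pa lC => p1 p2; rewrite cat_path last_cat /= => /andP[_ /andP[_ pz]] lC.
exact: (path_connect pz) (mem_last _ _).
Qed.

Lemma build x (hx : e x x) (xC : x \in C) (L : seq T) : {subset L <= C} ->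
  exists s, [/\ path e x s, last x s = x, (0 < size s)%N, {subset s <= C}
             & {subset L <= x :: s}].
Proof.
elim: L => [|y L IH] LC.
  exists [:: x]; split => //=; [by rewrite hx | by move=> z; rewrite inE => /eqP->].
have [|s [ps ls sz sC Ls]] := IH; first by move=> z zL; apply: LC; rewrite inE zL orbT.
have yC : y \in C by apply: LC; rewrite inE eqxx.
have xy : connect e x y by move: xC yC; rewrite hCd !inE => /andP[_ xr] /andP[ry _]; exact: connect_trans xr ry.
have yx : connect e y x by move: xC yC; rewrite hCd !inE => /andP[rx _] /andP[_ yr]; exact: connect_trans yr rx.
case/connectP: xy => p1 pp1 l1; case/connectP: yx => p2 pp2 l2.
exists (s ++ p1 ++ p2); split.
- by rewrite !cat_path ps ls pp1 -l1 pp2.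
- by rewrite !last_cat ls -l1 -l2.
- by rewrite size_cat addn_gt0 sz.
- move=> z; rewrite !mem_cat => /or3P[/sC//| |].
    by apply: (path_inC xC pp1); rewrite -l1.
  by apply: (path_inC yC pp2); rewrite -l2.
- move=> z; rewrite inE => /orP[/eqP->|/Ls].
    have := mem_last x p1; rewrite -l1 !inE !mem_cat => /orP[->//|->].
    by rewrite !orbT.
  by rewrite inE => /orP[/eqP->|zs]; [rewrite inE eqxx | rewrite inE mem_cat zs orbT].
Qed.
End Gen.

Section Per.
Variables (T : finType) (e : rel T) (x : T) (s : seq T).
Hypotheses (ps : path e x s) (ls : last x s = x) (sz : (0 < size s)%N).

Definition psi (t : int) : T := nth x (x :: s) `|(t %% (size s)%:Z)%Z|%N.

Lemma nth_p : nth x (x :: s) (size s) = x.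
Proof.
have -> : size s = (size s).-1.+1 by rewrite prednK.
by rewrite /= nth_last ls.
Qed.

Lemma nth_mod j : (j <= size s)%N -> nth x (x :: s) (j %% size s) = nth x (x :: s) j.
Proof.
rewrite leq_eqVlt => /orP[/eqP->|jlt]; last by rewrite modn_small.
by rewrite modnn nth_p.
Qed.

Lemma psi_eq u j : (j <= size s)%N -> (u %% (size s)%:Z)%Z = ((j%:Z) %% (size s)%:Z)%Z ->
  psi u = nth x (x :: s) j.
Proof. by move=> js h; rewrite /psi h modz_nat absz_nat nth_mod. Qed.

Lemma psi_edge t : e (psi t) (psi (t + 1)).
Proof.
set k := `|(t %% (size s)%:Z)%Z|%N.
have p0 : (0 < (size s)%:Z) by rewrite ltz_nat.
have tk : (t %% (size s)%:Z)%Z = k%:Z by rewrite gez0_abs // modz_ge0 // gt_eqF.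
have klt : (k < size s)%N by rewrite -ltz_nat -tk ltz_pmod.
have -> : psi (t + 1) = nth x (x :: s) k.+1.
  apply: psi_eq => //.
  have -> : (k.+1)%:Z = k%:Z + 1 by lia.
  by rewrite -modzDml tk.
exact: (pathP x ps k klt).
Qed.

Lemma psi_mem t : psi t \in x :: s.
Proof.
rewrite /psi; apply: mem_nth => /=.
have p0 : (0 < (size s)%:Z) by rewrite ltz_nat.
have h1 := ltz_pmod t p0.
have h2 : 0 <= (t %% (size s)%:Z)%Z by rewrite modz_ge0 // gt_eqF.
lia.
Qed.

Lemma psi0 : psi 0 = x.
Proof. by rewrite /psi mod0z. Qed.

Lemma psi_hits j : (j <= size s)%N -> forall n,
  (exists2 u, u <= n & psi u = nth x (x :: s) j) /\
  (exists2 u, n <= u & psi u = nth x (x :: s) j).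
Proof.
move=> js n.
have p0 : (0 < (size s)%:Z) by rewrite ltz_nat.
set p := (size s)%:Z in p0 *.
set q := ((n - j%:Z) %/ p)%Z.
set m := ((n - j%:Z) %% p)%Z.
have hd : n - j%:Z = q * p + m by rewrite /q /m -divz_eq.
have m0 : 0 <= m by rewrite /m modz_ge0 // gt_eqF.
have mp : m < p by rewrite /m ltz_pmod.
set qp := q * p in hd.
split.
  exists (q * p + j%:Z); first by rewrite -/qp; lia.
  by apply: psi_eq => //; rewrite modzMDl.
exists ((q + 1) * p + j%:Z).
  by rewrite mulrDl mul1r -/qp; lia.
by apply: psi_eq => //; rewrite modzMDl.
Qed.
End Per.

Lemma path_conn_fwd (T : finType) (e : rel T) (a b : int) (phi : int -> T) :
  (forall i, a <= i -> i < b -> e (phi i) (phi (i + 1))) ->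
  forall k : nat, a + k%:Z <= b -> connect e (phi a) (phi (a + k%:Z)).
Proof.
move=> hp; elim=> [|k IH] hk; first by rewrite addr0 connect0.
have -> : a + (k.+1)%:Z = (a + k%:Z) + 1 by lia.
apply: connect_trans (IH _) (connect1 (hp _ _ _)); lia.
Qed.

Lemma path_conn_bwd (T : finType) (e : rel T) (a b : int) (phi : int -> T) :
  (forall i, a <= i -> i < b -> e (phi i) (phi (i + 1))) ->
  forall k : nat, a <= b - k%:Z -> connect e (phi (b - k%:Z)) (phi b).
Proof.
move=> hp; elim=> [|k IH] hk; first by rewrite subr0 connect0.
have h : b - k%:Z = (b - (k.+1)%:Z) + 1 by lia.
apply: connect_trans (connect1 _) (IH _); last by lia.
rewrite h; apply: hp; lia.
Qed.

Theorem theorem4p15 (T : finType) (O : {set {set T}})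
  (hO : is_topology O) (hT0 : is_T0 O)
  (crit : {set T} -> bool)
  (V : {set {set T}}) (hV : mvfield O V)
  (C : {set T}) (hC : is_scc O V C)
  (hess : exists phi : int -> T,
     [/\ full_solution O V phi, essential V crit phi & forall t, phi t \in C]) :
  isolated_invariant O V crit C.
Proof.
case: hC => r hCd.
case: hess => phi [fs ess phiC].
set e := Gedge O V.
split.
  move=> y; split; last by case.
  move=> yC; split => //.
  have hy : e y y.
    rewrite /e /Gedge /Pi inE; apply/orP; right.
    rewrite /cl; apply/bigcapP => B /andP[_ sub]; exact: (subsetP sub) y (set11 y).
  have Lsub : {subset enum C <= C} by move=> z; rewrite mem_enum.
  have [s [ps ls sz sC Ls]] := @build _ e r C hCd y hy yC (enum C) Lsub.
  have psiC : forall t, psi _ y s t \in C.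
    by move=> t; have := @psi_mem _ e y s ps sz t; rewrite inE => /orP[/eqP->|/sC].
  exists (psi _ y s); split => //; last exact: (@psi0 _ y s).
    by move=> t; exact: (@psi_edge _ e y s ps ls sz).
  move=> t ncrit; set W := cell V (psi _ y s t) in ncrit *.
  case: (boolP [exists z in C, z \notin W]) => [/exists_inP[z zC zW]|].
    have zin : z \in y :: s by apply: Ls; rewrite mem_enum.
    have js : (index z (y :: s) <= size s)%N by rewrite -ltnS -[(size s).+1]/(size (y :: s)) index_mem.
    split => n; have [[u1 h1 e1] [u2 h2 e2]] := @psi_hits _ e y s ps ls sz _ js n.
      by exists u1 => //; rewrite e1 nth_index.
    by exists u2 => //; rewrite e2 nth_index.
  rewrite negb_exists_in => /forall_inP allW.
  case: hV => /and3P[/eqP cov triv _] _.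
  have Wv : W \in V by rewrite /W /cell pblock_mem // cov inE.
  have p0W : phi 0 \in W by have := allW _ (phiC 0); rewrite negbK.
  have cW : cell V (phi 0) = W by rewrite /cell (def_pblock triv Wv p0W).
  have nc0 : ~~ crit (cell V (phi 0)) by rewrite cW.
  have [h _] := ess 0 nc0; have [u hu hW] := h 0.
  by move: hW; rewrite cW; have := allW _ (phiC u); rewrite negbK => ->.
exists setT; split.
- by rewrite /is_closed setCT; case: hO.
- exact: subsetT.
- move=> a b ph [ab hp] _ aC bC i ai ib.
  have hp' : forall i, a <= i -> i < b -> e (ph i) (ph (i + 1)) by [].
  apply: (@inC _ e r C hCd _ _ _ aC bC).
    have -> : i = a + (`|i - a|%N)%:Z by lia.
    apply: (@path_conn_fwd _ e a b ph hp'); lia.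
  have -> : i = b - (`|b - i|%N)%:Z by lia.
  apply: (@path_conn_bwd _ e a b ph hp'); lia.
- exact: subsetT.
Qed.
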